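(* Let $\alpha,\beta\in\{-1,0,1\}$, and let $\tilde{C}\in\{0,1\}^{\tilde{K}\times n}$ and $\hat{C}\in\{0,1\}^{\hat{K}\times n}$ be cost matrices of two ordinal objectives on the same $n$ elements. Then the matrix \[ A=\begin{pmatrix}\alpha\,\tilde{C}\\ \beta\,\hat{C}\end{pmatrix} \] is totally unimodular.
   Context: An ordinal objective on $n$ elements with $K$ categories $\eta_1\prec\dots\prec\eta_K$ is given by an assignment $o:\{1,\dots,n\}\to\{\eta_1,\dots,\eta_K\}$; its cost matrix $C\in\{0,1\}^{K\times n}$ has $C_{ji}=1$ if $j\le k$ where $o(i)=\eta_k$, and $C_{ji}=0$ otherwise (each column consists of ones in rows $1,\dots,k$ for some $k\ge1$, followed by zeros). $\tilde{C}$ and $\hat{C}$ are such matrices for assignments $\tilde{o}$ (with $\tilde{K}$ categories) and $\hat{o}$ (with $\hat{K}$ categories). A matrix is totally unimodular if every square submatrix has determinant in $\{-1,0,1\}$. *)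

(* Defs.v *)
From mathcomp Require Import all_boot all_order all_algebra.
Set Implicit Arguments. Unset Strict Implicit. Unset Printing Implicit Defensive.
Import GRing.Theory Num.Theory.
Local Open Scope ring_scope.

(* An ordinal objective on n elements with K categories eta_1 < ... < eta_K:
   o : 'I_n -> 'I_K, where o i = k (0-indexed) means o(i) = eta_(k+1). *)
Definition cost_matrix (K n : nat) (o : 'I_n -> 'I_K) : 'M[int]_(K, n) :=
  \matrix_(j < K, i < n) (if (j <= o i)%N then 1 else 0).

Definition totally_unimodular (m n : nat) (A : 'M[int]_(m, n)) : Prop :=
  forall (k : nat) (f : 'I_k -> 'I_m) (g : 'I_k -> 'I_n),
    injective f -> injective g ->
    \det (mxsub f g A) \in [:: -1; 0; 1].

(* Main.v *)
Require Import Defs.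
From mathcomp Require Import all_boot all_order all_algebra.
From mathcomp Require Import zify perm.
Set Implicit Arguments. Unset Strict Implicit. Unset Printing Implicit Defensive.
Import Order.TTheory GRing.Theory Num.Theory.
Local Open Scope ring_scope.
Definition U3 : seq int := [:: -1; 0; 1].

Lemma U3_mul (x y : int) : x \in U3 -> y \in U3 -> x * y \in U3.
Proof. by rewrite !inE => /or3P [] /eqP-> /or3P [] /eqP->. Qed.

Lemma U3_sign (n : nat) : (-1) ^+ n \in U3.
Proof. by rewrite -signr_odd; case: odd. Qed.

Definition netmx k (N : 'M[int]_k) :=
  [/\ forall i j, N i j \in U3,
      forall i i' j, N i j = 1 -> N i' j = 1 -> i = i' &
      forall i i' j, N i j = -1 -> N i' j = -1 -> i = i'].

Lemma netmx_det k (N : 'M[int]_k) : netmx N -> \det N \in U3.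
Proof.
elim: k N => [|k IH] N [HU Hp Hm]; first by rewrite det_mx00.
case: (boolP [exists j, [forall i, N i j != 1] || [forall i, N i j != -1]]).
  move=> /existsP [j Hj].
  have Hc : forall i i', N i j != 0 -> N i' j != 0 -> i = i'.
    move=> i i' Hi Hi'; case/orP: Hj => /forallP Hj.
      apply: (Hm _ _ j).
        by move: (HU i j) (Hj i) Hi; rewrite !inE => /or3P [] /eqP ->.
      by move: (HU i' j) (Hj i') Hi'; rewrite !inE => /or3P [] /eqP ->.
    apply: (Hp _ _ j).
      by move: (HU i j) (Hj i) Hi; rewrite !inE => /or3P [] /eqP ->.
    by move: (HU i' j) (Hj i') Hi'; rewrite !inE => /or3P [] /eqP ->.
  rewrite (expand_det_col _ j).
  case: (boolP [exists i, N i j != 0]).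
    move=> /existsP [i0 Hi0]; rewrite (bigD1 i0) //= big1 ?addr0.
      apply: U3_mul => //; rewrite /cofactor; apply: U3_mul; first exact: U3_sign.
      apply: IH; split.
      - by move=> a b; rewrite !mxE.
      - by move=> a a' b; rewrite !mxE => H1 H2; apply: (lift_inj (Hp _ _ _ H1 H2)).
      - by move=> a a' b; rewrite !mxE => H1 H2; apply: (lift_inj (Hm _ _ _ H1 H2)).
    move=> i Hi; case: (eqVneq (N i j) 0) => [->|Hn]; first by rewrite mul0r.
    by rewrite (Hc _ _ Hn Hi0) eqxx in Hi.
  move/existsPn => H0; rewrite big1 // => i _.
  by move: (H0 i); rewrite negbK => /eqP ->; rewrite mul0r.
rewrite negb_exists => /forallP Hj.
have Hsum : forall j, \sum_i N i j = 0.
  move=> j; move: (Hj j); rewrite negb_or !negb_forall => /andP [/existsP [i1 H1] /existsP [i2 H2]].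
  move: H1 H2; rewrite !negbK => /eqP H1 /eqP H2.
  have H12 : i2 != i1 by apply/eqP => E; move: H1 H2; rewrite E => ->.
  rewrite (bigD1 i1) //= (bigD1 i2) //= big1 ?H1 ?H2 ?addr0 ?subrr //.
  move=> i /andP [Hi1 Hi2].
  move: (HU i j); rewrite !inE => /or3P [] /eqP E //.
    by rewrite (Hm _ _ _ E H2) eqxx in Hi2.
  by rewrite (Hp _ _ _ E H1) eqxx in Hi1.
pose v : 'rV[int]_k.+1 := const_mx 1.
have Hv : v *m N = 0.
  apply/matrixP => a b; rewrite !mxE -[RHS](Hsum b); apply: eq_bigr => i _.
  by rewrite mxE mul1r.
have : v *m (N *m \adj N) = 0 by rewrite mulmxA Hv mul0mx.
rewrite mul_mx_adj mul_mx_scalar => /matrixP /(_ 0 0).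
by rewrite !mxE mulr1 => ->.
Qed.

Lemma sum_ind k (P : pred 'I_k) (F : 'I_k -> int) :
  \sum_j (P j)%:R * F j = \sum_(j | P j) F j.
Proof. by rewrite [RHS]big_mkcond; apply: eq_bigr => j _; case: (P j); rewrite ?mul1r ?mul0r. Qed.

Lemma sorted_interval k (key lo hi : 'I_k -> int)
  (Hs : forall i i' : 'I_k, (i < i')%N -> key i < key i') :
  \det (\matrix_(i, c) (((lo c <= key i) && (key i <= hi c))%:R : int)) \in U3.
Proof.
case: k key lo hi Hs => [|k] key lo hi Hs; first by rewrite det_mx00.
set m := fun (i c : 'I_k.+1) => (lo c <= key i) && (key i <= hi c).
set M := \matrix_(i, c) _.
have Hle : forall i i' : 'I_k.+1, (i <= i')%N -> key i <= key i'.
  move=> i i'; rewrite leq_eqVlt => /orP [/eqP E|/Hs /ltW //].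
  by rewrite (ord_inj E).
have Hint : forall a b x c : 'I_k.+1, m a c -> m b c -> (a <= x <= b)%N -> m x c.
  move=> a b x c /andP [Ha _] /andP [_ Hb] /andP [Hax Hxb]; apply/andP; split.
    exact: (le_trans Ha (Hle _ _ Hax)).
  exact: (le_trans (Hle _ _ Hxb) Hb).
pose E : 'M[int]_k.+1 := \matrix_(i, j) ((i == j)%:R - (j.+1 == i :> nat)%:R).
have HE : \det E = 1.
  rewrite det_trig; last first.
    apply/is_trig_mxP => i j Hij; rewrite mxE.
    have -> : (i == j) = false by apply/negbTE; rewrite neq_ltn Hij.
    have -> : (j.+1 == i :> nat) = false by apply/negbTE; apply/eqP => HH; lia.
    by rewrite subrr.
  by apply: big1 => i _; rewrite mxE eqxx (_ : (i.+1 == i :> nat) = false) ?subr0 //; lia.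
pose pv i c := [exists j : 'I_k.+1, (j.+1 == i :> nat) && m j c].
have HN : forall i c, (E *m M) i c = (m i c)%:R - (pv i c)%:R.
  move=> i c; rewrite mxE.
  under eq_bigr do rewrite !mxE mulrBl.
  rewrite sumrB !sum_ind (big_pred1 i); last by move=> j; rewrite /= eq_sym.
  congr (_ - _).
  case: (boolP [exists j : 'I_k.+1, j.+1 == i :> nat]).
    move=> /existsP [j0 Hj0]; rewrite (big_pred1 j0).
      congr (_%:R); congr (nat_of_bool _); apply/idP/idP => [H|/existsP [j /andP [Hj H]]]; first by apply/existsP; exists j0; rewrite Hj0.
      by have -> : j0 = j by apply/ord_inj; move/eqP: Hj0; move/eqP: Hj; lia.
    move=> j /=; apply/eqP/eqP => [E1|->]; last exact/eqP.
    by apply/ord_inj; move/eqP: Hj0; lia.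
  move/existsPn => H0; rewrite big_pred0; last by move=> j; exact/negbTE.
  suff -> : pv i c = false by [].
  apply/negbTE/existsPn => j; by rewrite (negbTE (H0 j)).
have HA : forall i i' c, m i c -> m i' c -> ~~ pv i' c -> (i' <= i)%N.
  move=> i i' c Hi Hi' Hp; rewrite leqNgt; apply/negP => Hlt.
  have Hj : (i'.-1 < k.+1)%N by have := ltn_ord i'; lia.
  move/existsP: Hp; apply; exists (Ordinal Hj) => /=; apply/andP; split.
    apply/eqP; lia.
  by apply: (Hint _ _ _ _ Hi Hi') => /=; apply/andP; split; lia.
have HB : forall i i' c, ~~ m i c -> pv i c -> pv i' c -> (i < i')%N -> false.
  move=> i i' c Hi /existsP [j /andP [/eqP Hj Hmj]] /existsP [j' /andP [/eqP Hj' Hmj']] Hlt.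
  have : m i c by apply: (Hint j j' i c Hmj Hmj'); apply/andP; split; lia.
  by rewrite (negbTE Hi).
have : netmx (E *m M).
  split.
  - by move=> i c; rewrite HN; case: (m i c); case: (pv i c).
  - move=> i i' c; rewrite !HN.
    case Hi: (m i c); case Hpi: (pv i c) => //= _;
    case Hi': (m i' c); case Hpi': (pv i' c) => //= _.
    apply/ord_inj/anti_leq; apply/andP; split.
      by apply: (HA _ _ c) => //; rewrite Hpi.
    by apply: (HA _ _ c) => //; rewrite Hpi'.
  - move=> i i' c; rewrite !HN.
    case Hi: (m i c); case Hpi: (pv i c) => //= _;
    case Hi': (m i' c); case Hpi': (pv i' c) => //= _.
    case: (ltngtP i i') => [H|H|H]; last exact: ord_inj.
      by have := HB _ _ c (negbT Hi) Hpi Hpi' H.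
    by have := HB _ _ c (negbT Hi') Hpi' Hpi H.
by move/netmx_det; rewrite det_mulmx HE mul1r.
Qed.

Lemma interval_det k (key lo hi : 'I_k -> int) :
  \det (\matrix_(i, c) (((lo c <= key i) && (key i <= hi c))%:R : int)) \in U3.
Proof.
set M := \matrix_(i, c) _.
case: (boolP [exists a, exists b, (a != b) && (key a == key b)]).
  move=> /existsP [a /existsP [b /andP [Hab /eqP Hk]]].
  by rewrite (determinant_alternate Hab) // => c; rewrite !mxE Hk.
move=> Hinj.
have kinj : injective key.
  move=> a b Hk; apply/eqP; apply: contraT => Hab.
  suff : [exists a, exists b, (a != b) && (key a == key b)] by rewrite (negbTE Hinj).
  by apply/existsP; exists a; apply/existsP; exists b; rewrite Hab Hk eqxx.
have Hcard : forall r : 'I_k, (#|[set s | (key s < key r)%R]| < k)%N.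
  move=> r; apply: (@leq_trans #|[set: 'I_k]|); last by rewrite cardsT card_ord.
  apply: proper_card.
  apply/properP; split; first exact: subsetT.
  by exists r; rewrite ?inE // ltxx.
pose rk r : 'I_k := Ordinal (Hcard r).
have rk_mono : forall a b, key a < key b -> (rk a < rk b)%N.
  move=> a b Hab; apply: proper_card; apply/properP; split.
    by apply/subsetP => s; rewrite !inE => /lt_trans; apply.
  by exists a; rewrite !inE ?Hab ?ltxx.
have rk_inj : injective rk.
  move=> a b Hr; apply: kinj.
  case: (ltgtP (key a) (key b)) => // H.
    by have := rk_mono _ _ H; rewrite Hr ltnn.
  by have := rk_mono _ _ H; rewrite Hr ltnn.
pose s := perm rk_inj.
have Hs : forall i i' : 'I_k, (i < i')%N -> key ((s^-1)%g i) < key ((s^-1)%g i').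
  move=> i i' Hii'.
  case: (ltgtP (key ((s^-1)%g i)) (key ((s^-1)%g i'))) => // H.
    have := rk_mono _ _ H; rewrite -!(permE rk_inj) -/s !permKV => H2.
    by have := ltn_trans Hii' H2; rewrite ltnn.
  have := kinj _ _ H => /(congr1 s); rewrite !permKV => E.
  by move: Hii'; rewrite E ltnn.
have := sorted_interval lo hi Hs.
set M' := \matrix_(i, c) _ => HM'.
have -> : M = row_perm s M'.
  by apply/matrixP => i c; rewrite !mxE permK.
by rewrite row_permE det_mulmx det_perm; apply: U3_mul => //; apply: U3_sign.
Qed.

Theorem theorem1 (n Kt Kh : nat) (ot : 'I_n -> 'I_Kt) (oh : 'I_n -> 'I_Kh)
  (alpha beta : int) (halpha : alpha \in [:: -1; 0; 1])
  (hbeta : beta \in [:: -1; 0; 1]) :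
  totally_unimodular
    (col_mx (alpha *: cost_matrix ot) (beta *: cost_matrix oh)).
Proof.
move=> k f g _ _; change (\det (mxsub f g (col_mx (alpha *: cost_matrix ot) (beta *: cost_matrix oh))) \in U3).
pose s r := match split (f r) with inl _ => alpha | inr _ => beta end.
pose key r : int := match split (f r) with inl j => - (j : nat)%:Z - 1 | inr j => (j : nat)%:Z end.
pose lo c : int := - (ot (g c) : nat)%:Z - 1.
pose hi c : int := (oh (g c) : nat)%:Z.
have -> : mxsub f g (col_mx (alpha *: cost_matrix ot) (beta *: cost_matrix oh)) =
   diag_mx (\row_r s r) *m \matrix_(i, c) (((lo c <= key i) && (key i <= hi c))%:R : int).
  rewrite mul_diag_mx; apply/matrixP => r c; rewrite !mxE /s /key /lo /hi.
  case: splitP => j Hj.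
    rewrite !mxE.
    have -> : (- (j : nat)%:Z - 1 <= (oh (g c) : nat)%:Z) = true by apply/idP; lia.
    have -> : (- (ot (g c) : nat)%:Z - 1 <= - (j : nat)%:Z - 1) = (j <= ot (g c))%N.
      by apply/idP/idP => H; lia.
    by case: leqP.
  rewrite !mxE.
  have -> : (- (ot (g c) : nat)%:Z - 1 <= (j : nat)%:Z) = true by apply/idP; lia.
  have -> : ((j : nat)%:Z <= (oh (g c) : nat)%:Z) = (j <= oh (g c))%N.
    by apply/idP/idP => H; lia.
  by case: leqP.
rewrite det_mulmx det_diag; apply: U3_mul; last exact: interval_det.
apply: (big_ind (fun x => x \in U3)) => //; first exact: U3_mul.
by move=> r _; rewrite mxE /s; case: split.
Qed.
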